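(* Let $\mathcal{P}\subset\mathbb{R}^d$ be a finite set of item vectors, $\bm{q}\in\mathbb{R}^d$, $k>1$ an integer, $\lambda\in[0,1]$, $\mu>0$, and assume $\langle\bm{x},\bm{y}\rangle\ge0$ for all $\bm{x},\bm{y}\in\mathcal{P}\cup\{\bm{q}\}$. Let $\mathcal{N}\subseteq\mathcal{P}$ be nonempty with center $\bm{c}=\frac{1}{|\mathcal{N}|}\sum_{\bm{p}\in\mathcal{N}}\bm{p}$ and radius $r=\max_{\bm{p}\in\mathcal{N}}\|\bm{p}-\bm{c}\|$. Then for every $\mathcal{S}\subseteq\mathcal{P}$, and for $\Delta_f$ equal to either $\Delta_{f_{avg}}$ or $\Delta_{f_{max}}$, $$\max_{\bm{p}\in\mathcal{N}}\Delta_f(\bm{p},\mathcal{S})\le\tfrac{\lambda}{k}\big(\langle\bm{q},\bm{c}\rangle+r\|\bm{q}\|\big).$$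
   Context: $\Delta_{f_{avg}}(\bm{p},\mathcal{S}) = \frac{\lambda}{k}\langle\bm{p},\bm{q}\rangle - \frac{2\mu(1-\lambda)}{k(k-1)}\sum_{\bm{p}'\in\mathcal{S}}\langle\bm{p},\bm{p}'\rangle$ and $\Delta_{f_{max}}(\bm{p},\mathcal{S}) = \frac{\lambda}{k}\langle\bm{p},\bm{q}\rangle - \mu(1-\lambda)\big(\max_{\bm{p}_x\ne\bm{p}_y\in\mathcal{S}\cup\{\bm{p}\}}\langle\bm{p}_x,\bm{p}_y\rangle - \max_{\bm{p}_x\ne\bm{p}_y\in\mathcal{S}}\langle\bm{p}_x,\bm{p}_y\rangle\big)$, where a maximum over an empty collection of pairs is taken to be $0$. These are the marginal gains of the diversity-aware objectives $f_{avg}(\mathcal{S}) = \frac{\lambda}{k}\sum_{\bm{p}\in\mathcal{S}}\langle\bm{p},\bm{q}\rangle - \frac{2\mu(1-\lambda)}{k(k-1)}\sum_{\{\bm{p},\bm{p}'\}\subseteq\mathcal{S}}\langle\bm{p},\bm{p}'\rangle$ and $f_{max}(\mathcal{S}) = \frac{\lambda}{k}\sum_{\bm{p}\in\mathcal{S}}\langle\bm{p},\bm{q}\rangle-\mu(1-\lambda)\max_{\bm{p}\ne\bm{p}'\in\mathcal{S}}\langle\bm{p},\bm{p}'\rangle$. The set $\mathcal{N}$ plays the role of a node of a ball tree (BC-Tree) storing its centroid and radius. *)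

(* Defs.v *)
From HB Require Import structures.
From mathcomp Require Import all_boot all_order all_algebra.
From mathcomp Require Import reals.
Set Implicit Arguments. Unset Strict Implicit. Unset Printing Implicit Defensive.
Import Order.TTheory GRing.Theory Num.Theory.
Local Open Scope ring_scope.

Section Defs.
Variables (R : realType) (d : nat).
Implicit Types (x y p q c : 'rV[R]_d) (S N : seq 'rV[R]_d).

Definition dotp x y : R := \sum_(i < d) x 0 i * y 0 i.

Definition vnorm x : R := Num.sqrt (dotp x x).

(* centroid c = (1/|N|) sum_{p in N} p  (N a duplicate-free seq) *)
Definition centroid N : 'rV[R]_d := (size N)%:R^-1 *: \sum_(p <- N) p.

(* radius r = max_{p in N} ||p - c||  (norms are >= 0, so 0 is a neutral start) *)
Definition radius N : R := \big[Num.max/0]_(p <- N) vnorm (p - centroid N).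

(* max over pairs of distinct elements x != y of S of <x,y>; 0 if no such pair.
   Used only with nonnegative inner products, where this is the true max. *)
Definition maxpair S : R :=
  \big[Num.max/0]_(x <- S) \big[Num.max/0]_(y <- S | y != x) dotp x y.

Definition addp p S : seq 'rV[R]_d := if p \in S then S else p :: S.

Definition delta_avg (lam mu : R) (k : nat) q p S : R :=
  lam / k%:R * dotp p q
  - (2 * mu * (1 - lam)) / (k%:R * (k%:R - 1)) * \sum_(p' <- S) dotp p p'.

Definition delta_max (lam mu : R) (k : nat) q p S : R :=
  lam / k%:R * dotp p q
  - mu * (1 - lam) * (maxpair (addp p S) - maxpair S).

(* max_{p in N} F p, for nonempty N *)
Definition seqmax (N : seq 'rV[R]_d) (F : 'rV[R]_d -> R) : R :=
  \big[Num.max/F (head 0 N)]_(p <- N) F p.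

End Defs.

(* Main.v *)
Require Import Defs.
From HB Require Import structures.
From mathcomp Require Import all_boot all_order all_algebra.
From mathcomp Require Import reals.
From mathcomp Require Import ring lra.
Import Order.TTheory GRing.Theory Num.Theory.
Local Open Scope ring_scope.

Section Helpers.
Variables (R : realType) (d : nat).
Implicit Types (x y p c : 'rV[R]_d).

Lemma dotpC x y : dotp x y = dotp y x.
Proof. by apply: eq_bigr => i _; rewrite mulrC. Qed.

Lemma dotpBl x y c : dotp (x - y) c = dotp x c - dotp y c.
Proof.
rewrite /dotp -sumrB; apply: eq_bigr => i _; rewrite !mxE; ring.
Qed.

Lemma dotp_ge0 x : 0 <= dotp x x.
Proof. by apply: sumr_ge0 => i _; rewrite -expr2 sqr_ge0. Qed.

Lemma sum_prod (F G : 'I_d -> R) :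
  \sum_i \sum_j F i * G j = (\sum_i F i) * (\sum_j G j).
Proof. by rewrite mulr_suml; apply: eq_bigr => i _; rewrite mulr_sumr. Qed.

Lemma cs2 x y : dotp x y ^+ 2 <= dotp x x * dotp y y.
Proof.
have H : 0 <= \sum_(i < d) \sum_(j < d) (x 0 i * y 0 j - x 0 j * y 0 i) ^+ 2.
  by apply: sumr_ge0 => i _; apply: sumr_ge0 => j _; apply: sqr_ge0.
have E : \sum_(i < d) \sum_(j < d) (x 0 i * y 0 j - x 0 j * y 0 i) ^+ 2
   = 2 * (dotp x x * dotp y y - dotp x y ^+ 2).
  transitivity (\sum_(i < d) \sum_(j < d)
     ((x 0 i * x 0 i) * (y 0 j * y 0 j) + (y 0 i * y 0 i) * (x 0 j * x 0 j)
      - 2 * ((x 0 i * y 0 i) * (x 0 j * y 0 j)))).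
    by apply: eq_bigr => i _; apply: eq_bigr => j _; ring.
  under eq_bigr => i _ do rewrite sumrB big_split /=.
  rewrite sumrB big_split /= !sum_prod.
  under eq_bigr => i _ do rewrite -mulr_sumr.
  rewrite -mulr_sumr sum_prod /dotp; ring.
move: H; rewrite E => H.
have : 0 <= dotp x x * dotp y y - dotp x y ^+ 2 by rewrite -(pmulr_rge0 _ (ltr0Sn R 1)).
lra.
Qed.

Lemma cs x y : dotp x y <= vnorm x * vnorm y.
Proof.
rewrite /vnorm -sqrtrM ?dotp_ge0 //.
apply: (le_trans (ler_norm _)).
rewrite -sqrtr_sqr ler_sqrt; last by rewrite mulr_ge0 ?dotp_ge0.
exact: cs2.
Qed.

Lemma bigmax_ub (T : eqType) (s : seq T) (F : T -> R) (a : R) (x : T) :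
  x \in s -> F x <= \big[Num.max/a]_(y <- s) F y.
Proof.
elim: s => // z s IH; rewrite in_cons big_cons => /orP [/eqP -> | /IH h].
  by rewrite le_max lexx.
by rewrite le_max h orbT.
Qed.

Lemma bigmax_le (T : eqType) (s : seq T) (F : T -> R) (a B : R) :
  a <= B -> (forall x : T, x \in s -> F x <= B) -> \big[Num.max/a]_(y <- s) F y <= B.
Proof.
move=> aB H; rewrite big_seq; apply: (big_ind (fun v => v <= B)) => //.
  by move=> u v hu hv; rewrite ge_max hu hv.
Qed.

Lemma maxpair_mono p S : maxpair S <= maxpair (addp p S).
Proof.
rewrite /addp; case: ifP => _; first exact: lexx.
rewrite /maxpair big_cons le_max; apply/orP; right.
apply: (big_ind2 (fun a b => a <= b)) => //.
  by move=> ? ? ? ? ? ?; apply: le_max2.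
move=> x _; rewrite big_cons; case: ifP => _ //.
by rewrite le_max lexx orbT.
Qed.

End Helpers.

Theorem theorem4 (R : realType) (d : nat) (P : seq 'rV[R]_d) (q : 'rV[R]_d)
    (k : nat) (lam mu : R) (N S : seq 'rV[R]_d) :
  uniq P -> (1 < k)%N -> 0 <= lam <= 1 -> 0 < mu ->
  (forall x y, x \in q :: P -> y \in q :: P -> 0 <= dotp x y) ->
  uniq N -> N != [::] -> {subset N <= P} ->
  uniq S -> {subset S <= P} ->
  seqmax N (fun p => delta_avg lam mu k q p S)
    <= lam / k%:R * (dotp q (centroid N) + radius N * vnorm q)
  /\
  seqmax N (fun p => delta_max lam mu k q p S)
    <= lam / k%:R * (dotp q (centroid N) + radius N * vnorm q).
Proof.
move=> _ k1 /andP [l0 l1] mu0 hpos _ N0 NP _ SP.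
set B := lam / k%:R * _.
have k0 : 0 < k%:R :> R by rewrite ltr0n; apply: ltn_trans k1.
have k1' : 1 < k%:R :> R by rewrite ltr1n.
have lk : 0 <= lam / k%:R by rewrite divr_ge0 // ltW.
have base : forall p, p \in N -> lam / k%:R * dotp p q <= B.
  move=> p pN; rewrite /B; apply: ler_wpM2l => //.
  have -> : dotp p q = dotp q (centroid N) + dotp (p - centroid N) q.
    by rewrite dotpBl (@dotpC _ _ (centroid N) q); ring.
  rewrite lerD2l; apply: (le_trans (@cs _ _ _ _)); apply: ler_wpM2r.
    by rewrite /vnorm sqrtr_ge0.
  exact: (@bigmax_ub R _ N (fun p => vnorm (p - centroid N)) 0 p pN).
have hd : head 0 N \in N by rewrite -nth0 mem_nth // lt0n size_eq0.
split; rewrite /seqmax.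
- have G : forall p, p \in N -> delta_avg lam mu k q p S <= B.
    move=> p pN; apply: le_trans (base p pN); rewrite /delta_avg gerBl.
    apply: mulr_ge0.
      have l1' : 0 <= 1 - lam by lra.
      have k2 : 0 <= k%:R - 1 :> R by lra.
      apply: divr_ge0; first by rewrite !mulr_ge0 // ltW.
      by rewrite mulr_ge0 // ltW.
    rewrite big_seq; apply: sumr_ge0 => p' p'S; apply: hpos; rewrite in_cons.
      by rewrite (NP p pN) orbT.
    by rewrite (SP p' p'S) orbT.
  by apply: (@bigmax_le R _ N) => //; apply: G.
- have G : forall p, p \in N -> delta_max lam mu k q p S <= B.
    move=> p pN; apply: le_trans (base p pN); rewrite /delta_max gerBl.
    have l1' : 0 <= 1 - lam by lra.
    apply: mulr_ge0; first by rewrite mulr_ge0 // ltW.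
    by rewrite subr_ge0; exact: maxpair_mono.
  by apply: (@bigmax_le R _ N) => //; apply: G.
Qed.
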